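(* Let $\gamma<\delta$, $c>0$, $g(t)=c(\delta-t)$ on $[\gamma,\delta]$, and let $0<\alpha<\beta$. Let $s\in(\gamma,\delta)$ and let $\varphi:[\gamma,\delta]\to[0,\infty)$ be a concave function with $\varphi(t)>0$ for all $t\in[\gamma,s]$. Then \[\frac{\int_\gamma^{s} t\,\varphi(t)^{\alpha-\beta}g(t)^\beta\,dt}{\int_\gamma^{s} \varphi(t)^{\alpha-\beta}g(t)^\beta\,dt}\leq\frac{\int_\gamma^{s} t\,(\delta-t)^{\alpha-\beta}g(t)^\beta\,dt}{\int_\gamma^{s} (\delta-t)^{\alpha-\beta}g(t)^\beta\,dt}=\frac{\int_\gamma^{s} t\,(\delta-t)^{\alpha}\,dt}{\int_\gamma^{s} (\delta-t)^{\alpha}\,dt}.\] *)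

(* Defs.v *)
From Stdlib Require Import Reals.
From Coquelicot Require Import Coquelicot.
Open Scope R_scope.

Definition concave_on (a b : R) (phi : R -> R) : Prop :=
  forall x y l, a <= x <= b -> a <= y <= b -> 0 <= l <= 1 ->
    l * phi x + (1 - l) * phi y <= phi (l * x + (1 - l) * y).

(* Main.v *)
Require Import Defs.
From Stdlib Require Import Reals Lra Classical.
From Coquelicot Require Import Coquelicot.
Open Scope R_scope.

Lemma conc_key (a0 b0 : R) phi (H : concave_on a0 b0 phi) a b c :
  a0 <= a -> a <= b -> b <= c -> c <= b0 ->
  (c-b)*phi a + (b-a)*phi c <= (c-a)*phi b.
Proof.
intros H1 H2 H3 H4.
destruct (Req_dec a c) as [E|E].
{ subst c. assert (b = a) by lra. subst b. lra. }
set (l := (c-b)/(c-a)).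
assert (Hl : 0 <= l <= 1).
{ unfold l; split.
  - apply Rmult_le_pos; [lra| left; apply Rinv_0_lt_compat; lra].
  - replace 1 with ((c-a)/(c-a)) by (field; lra).
    apply Rmult_le_compat_r; [left; apply Rinv_0_lt_compat; lra | lra]. }
assert (H' := H a c l ltac:(lra) ltac:(lra) Hl).
replace (l*a + (1-l)*c) with b in H' by (unfold l; field; lra).
apply (Rmult_le_compat_l (c-a)) in H'; [|lra].
replace ((c-a)*(l*phi a + (1-l)*phi c)) with ((c-b)*phi a + (b-a)*phi c) in H'
  by (unfold l; field; lra).
exact H'.
Qed.

Lemma abs_between u v z : (u <= z <= v \/ v <= z <= u) -> Rabs z <= Rabs u + Rabs v.
Proof.
intros H. unfold Rabs; repeat destruct Rcase_abs; lra.
Qed.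

Lemma conc_lip (a0 b0 : R) phi (H : concave_on a0 b0 phi) x :
  a0 < x < b0 -> exists K, 0 <= K /\
  forall y, a0 <= y <= b0 -> Rabs (phi y - phi x) <= K * Rabs (y - x).
Proof.
intros Hx.
set (p := (phi x - phi a0)/(x-a0)).
set (q := (phi b0 - phi x)/(b0-x)).
exists (Rabs p + Rabs q). split.
{ pose proof (Rabs_pos p); pose proof (Rabs_pos q); lra. }
intros y Hy.
rewrite Rmult_plus_distr_r, <- !Rabs_mult.
apply abs_between.
assert (Ep : p * (x - a0) = phi x - phi a0) by (unfold p; field; lra).
assert (Eq : q * (b0 - x) = phi b0 - phi x) by (unfold q; field; lra).
destruct (Rle_or_lt x y) as [Hxy|Hxy].
- right.
  pose proof (conc_key a0 b0 phi H a0 x y ltac:(lra) ltac:(lra) ltac:(lra) ltac:(lra)) as K1.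
  pose proof (conc_key a0 b0 phi H x y b0 ltac:(lra) ltac:(lra) ltac:(lra) ltac:(lra)) as K2.
  split.
  +
    apply (Rmult_le_reg_l (b0 - x)); [lra|].
    replace ((b0-x)*(q*(y-x))) with ((y-x)*(q*(b0-x))) by ring.
    rewrite Eq. nra.
  + apply (Rmult_le_reg_l (x - a0)); [lra|].
    replace ((x-a0)*(p*(y-x))) with ((y-x)*(p*(x-a0))) by ring.
    rewrite Ep. nra.
- left.
  pose proof (conc_key a0 b0 phi H a0 y x ltac:(lra) ltac:(lra) ltac:(lra) ltac:(lra)) as K1.
  pose proof (conc_key a0 b0 phi H y x b0 ltac:(lra) ltac:(lra) ltac:(lra) ltac:(lra)) as K2.
  split.
  + apply (Rmult_le_reg_l (x - a0)); [lra|].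
    replace ((x-a0)*(p*(y-x))) with ((y-x)*(p*(x-a0))) by ring.
    rewrite Ep. nra.
  + apply (Rmult_le_reg_l (b0 - x)); [lra|].
    replace ((b0-x)*(q*(y-x))) with ((y-x)*(q*(b0-x))) by ring.
    rewrite Eq. nra.
Qed.

Lemma conc_rlim (a0 b0 : R) phi (H : concave_on a0 b0 phi) s :
  a0 < s < b0 -> exists L, forall eps, 0 < eps -> exists eta, 0 < eta /\
  forall t, a0 < t < a0 + eta -> Rabs (phi t - L) < eps.
Proof.
intros Hs.
set (sg := fun t => (phi s - phi t)/(s - t)).
assert (Esg : forall t, t <> s -> sg t * (s - t) = phi s - phi t).
{ intros t Ht; unfold sg; field; lra. }
assert (Hub : forall t, a0 < t < s -> sg t <= sg a0).
{ intros t Ht.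
  pose proof (conc_key a0 b0 phi H a0 t s ltac:(lra) ltac:(lra) ltac:(lra) ltac:(lra)) as K.
  apply (Rmult_le_reg_l ((s-t)*(s-a0))); [nra|].
  replace ((s-t)*(s-a0)*sg t) with ((s-a0)*(sg t*(s-t))) by ring.
  replace ((s-t)*(s-a0)*sg a0) with ((s-t)*(sg a0*(s-a0))) by ring.
  rewrite !Esg by lra. lra. }
assert (Hmon : forall t1 t2, a0 < t1 <= t2 -> t2 < s -> sg t2 <= sg t1).
{ intros t1 t2 H1 H2.
  pose proof (conc_key a0 b0 phi H t1 t2 s ltac:(lra) ltac:(lra) ltac:(lra) ltac:(lra)) as K.
  apply (Rmult_le_reg_l ((s-t1)*(s-t2))); [nra|].
  replace ((s-t1)*(s-t2)*sg t2) with ((s-t1)*(sg t2*(s-t2))) by ring.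
  replace ((s-t1)*(s-t2)*sg t1) with ((s-t2)*(sg t1*(s-t1))) by ring.
  rewrite !Esg by lra. lra. }
set (E := fun y => exists t, a0 < t < s /\ y = sg t).
assert (Hb : bound E).
{ exists (sg a0). intros y [t [Ht ->]]. now apply Hub. }
assert (He : exists y, E y).
{ exists (sg ((a0+s)/2)). exists ((a0+s)/2). split; [lra|easy]. }
destruct (completeness E Hb He) as [S [HS1 HS2]].
exists (phi s - S*(s-a0)).
intros eps Heps.
set (e1 := eps / (2*(s-a0))).
assert (He1 : 0 < e1) by (unfold e1; apply Rdiv_lt_0_compat; lra).
assert (He1' : e1 * (s-a0) = eps/2) by (unfold e1; field; lra).
destruct (classic (exists t0, a0 < t0 < s /\ S - e1 < sg t0)) as [[t0 [Ht0 Hlt]]|Hn].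
2:{ exfalso. assert (S <= S - e1); [|lra].
    apply HS2. intros y [t [Ht ->]].
    destruct (Rle_or_lt (sg t) (S - e1)) as [?|?]; [easy|].
    exfalso; apply Hn; exists t; split; easy. }
set (e2 := eps / (2*(Rabs S + 1))).
pose proof (Rabs_pos S).
assert (He2 : 0 < e2) by (unfold e2; apply Rdiv_lt_0_compat; lra).
assert (He2' : e2 * (Rabs S + 1) = eps/2) by (unfold e2; field; lra).
exists (Rmin (t0 - a0) e2). split.
{ apply Rmin_pos; lra. }
intros t Ht.
pose proof (Rmin_l (t0-a0) e2). pose proof (Rmin_r (t0-a0) e2).
assert (Hst : sg t0 <= sg t) by (apply Hmon; lra).
assert (HtS : sg t <= S) by (apply HS1; exists t; split; [lra|easy]).
assert (Eq : phi t - (phi s - S*(s-a0)) = (S - sg t)*(s-t) + S*(t-a0)).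
{ pose proof (Esg t ltac:(lra)). nra. }
rewrite Eq.
apply (Rle_lt_trans _ _ _ (Rabs_triang _ _)).
rewrite !Rabs_mult.
rewrite (Rabs_right (S - sg t)) by lra.
rewrite (Rabs_right (s - t)) by lra.
rewrite (Rabs_right (t - a0)) by lra.
assert ((S - sg t)*(s-t) <= e1*(s-a0)) by (apply Rmult_le_compat; lra).
assert (Rabs S * (t-a0) < e2*(Rabs S + 1)) by nra.
lra.
Qed.

Lemma cont_of_eps f x0 :
  (forall eps, 0 < eps -> exists d, 0 < d /\ forall x, Rabs (x - x0) < d -> Rabs (f x - f x0) < eps) ->
  continuous f x0.
Proof.
intros H. apply continuity_pt_filterlim.
intros eps Heps. destruct (H eps Heps) as [d [Hd Hf]].
exists d; split; [lra|]. intros x [_ Hx]. apply Hf; exact Hx.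
Qed.

Lemma conc_ext (a0 b0 : R) phi (H : concave_on a0 b0 phi) s :
  a0 < s < b0 -> (forall t, a0 <= t <= s -> 0 < phi t) ->
  exists psi, (forall t, a0 < t -> psi t = phi t) /\
   (forall z, a0 <= z <= s -> continuous psi z /\ 0 < psi z).
Proof.
intros Hs Hpos.
destruct (conc_rlim a0 b0 phi H s Hs) as [L HL].
set (m := Rmin (phi a0) (phi s)).
assert (Hm : 0 < m) by (unfold m; apply Rmin_pos; apply Hpos; lra).
assert (Hge : forall t, a0 <= t <= s -> m <= phi t).
{ intros t Ht.
  pose proof (conc_key a0 b0 phi H a0 t s ltac:(lra) ltac:(lra) ltac:(lra) ltac:(lra)) as K.
  pose proof (Rmin_l (phi a0) (phi s)). pose proof (Rmin_r (phi a0) (phi s)).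
  fold m in H0, H1.
  apply (Rmult_le_reg_l (s - a0)); [lra|]. nra. }
assert (HLm : m <= L).
{ destruct (Rle_or_lt m L) as [?|HL']; [easy|exfalso].
  destruct (HL (m - L) ltac:(lra)) as [eta [Heta Ht]].
  set (t := a0 + Rmin eta (s - a0) / 2).
  pose proof (Rmin_l eta (s-a0)). pose proof (Rmin_r eta (s-a0)).
  assert (0 < Rmin eta (s-a0)) by (apply Rmin_pos; lra).
  specialize (Ht t ltac:(unfold t; lra)).
  specialize (Hge t ltac:(unfold t; lra)).
  apply Rabs_def2 in Ht. lra. }
exists (fun t => if Rle_dec t a0 then L else phi t).
split.
{ intros t Ht. destruct (Rle_dec t a0); [lra|easy]. }
intros z Hz. split.
2:{ destruct (Rle_dec z a0); [lra|]. apply Hpos; lra. }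
apply cont_of_eps. intros eps Heps.
destruct (Rle_dec z a0) as [Hza|Hza].
- assert (z = a0) by lra. subst z.
  destruct (HL eps Heps) as [eta [Heta Ht]].
  exists eta; split; [easy|]. intros x Hx.
  destruct (Rle_dec x a0).
  + rewrite Rminus_diag, Rabs_R0; lra.
  + apply Ht. apply Rabs_def2 in Hx. lra.
- destruct (conc_lip a0 b0 phi H z ltac:(lra)) as [K [HK HKl]].
  set (d := Rmin (Rmin (z - a0) (b0 - z)) (eps/(K+1))).
  assert (Hd : 0 < d).
  { unfold d; repeat apply Rmin_pos; try lra. apply Rdiv_lt_0_compat; lra. }
  exists d; split; [easy|]. intros x Hx.
  pose proof (Rmin_l (Rmin (z - a0) (b0 - z)) (eps/(K+1))).
  pose proof (Rmin_r (Rmin (z - a0) (b0 - z)) (eps/(K+1))).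
  pose proof (Rmin_l (z - a0) (b0 - z)). pose proof (Rmin_r (z - a0) (b0 - z)).
  fold d in H0, H1.
  pose proof Hx as Hx'. apply Rabs_def2 in Hx'.
  destruct (Rle_dec x a0); [lra|].
  apply (Rle_lt_trans _ _ _ (HKl x ltac:(lra))).
  assert (Ee : eps / (K+1) * (K+1) = eps) by (field; lra).
  pose proof (Rabs_pos (x - z)).
  nra.
Qed.

Lemma cont_Rpow (f : R -> R) e z : continuous f z -> 0 < f z -> continuous (fun t => Rpower (f t) e) z.
Proof.
intros Hf Hp. apply (continuous_comp f (fun x => Rpower x e)); [easy|].
apply (@ex_derive_continuous R_AbsRing R_NormedModule). exists (e * Rpower (f z) (e-1)).
apply is_derive_Reals. apply derivable_pt_lim_power; easy.
Qed.

Lemma cont_mult_R (f g : R -> R) x : continuous f x -> continuous g x -> continuous (fun t => f t * g t) x.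
Proof. intros H1 H2. exact (@continuous_mult R_UniformSpace R_AbsRing f g x H1 H2). Qed.

Lemma exR (f : R -> R) a b : a <= b -> (forall z, a <= z <= b -> continuous f z) -> ex_RInt f a b.
Proof.
intros Hab H. apply (@ex_RInt_continuous R_CompleteNormedModule). rewrite Rmin_left, Rmax_right by lra. exact H.
Qed.

Lemma RInt_ext' (f g : R -> R) a b : a <= b -> (forall x, a < x < b -> f x = g x) -> RInt f a b = RInt g a b.
Proof.
intros Hab H. apply (@RInt_ext R_CompleteNormedModule). rewrite Rmin_left, Rmax_right by lra. exact H.
Qed.

Lemma Rpower_le_neg e a b : e <= 0 -> 0 < a <= b -> Rpower b e <= Rpower a e.
Proof.
intros He Hab. unfold Rpower.
destruct (Req_dec a b) as [->|Hne]; [lra|].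
assert (ln a < ln b) by (apply ln_increasing; lra).
assert (e * ln b <= e * ln a) by nra.
destruct (Req_dec (e * ln b) (e * ln a)) as [E|E]; [rewrite E; lra|].
left; apply exp_increasing; lra.
Qed.

Lemma Lw c x al be : 0 < c -> 0 < x ->
  Rpower x (al - be) * Rpower (c * x) be = Rpower c be * Rpower x al.
Proof.
intros Hc Hx. rewrite <- Rpower_mult_distr by lra.
rewrite Rmult_comm, Rmult_assoc, <- Rpower_plus.
f_equal. f_equal. ring.
Qed.

Lemma RInt_ge_const (f : R -> R) a b k : a <= b -> ex_RInt f a b ->
  (forall x, a < x < b -> k <= f x) -> (b - a) * k <= RInt f a b.
Proof.
intros Hab Hf H.
replace ((b-a)*k) with (RInt (fun _ => k) a b) by (rewrite RInt_const; reflexivity).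
apply RInt_le; auto. apply ex_RInt_const.
Qed.

Lemma cont_dlt d (z : R) : continuous (fun t : R => d - t) z.
Proof. apply (@ex_derive_continuous R_AbsRing R_NormedModule). auto_derive. easy. Qed.
Lemma cont_cdlt c d (z : R) : continuous (fun t : R => c * (d - t)) z.
Proof. apply (@ex_derive_continuous R_AbsRing R_NormedModule). auto_derive. easy. Qed.
Lemma cont_idR (z : R) : continuous (fun t : R => t) z.
Proof. apply (@continuous_id R_UniformSpace). Qed.
Lemma cont_cstR (k z : R) : continuous (fun _ : R => k) z.
Proof. apply (@continuous_const R_UniformSpace R_UniformSpace). Qed.

Lemma ex_lin (f1 f2 : R -> R) a b m : ex_RInt f1 a b -> ex_RInt f2 a b ->
  ex_RInt (fun t => f1 t - m * f2 t) a b.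
Proof.
intros H1 H2.
apply (@ex_RInt_minus R_NormedModule f1 (fun t => scal m (f2 t))); [easy|].
apply (@ex_RInt_scal R_NormedModule); easy.
Qed.

Lemma RInt_lin (f1 f2 : R -> R) a b m : ex_RInt f1 a b -> ex_RInt f2 a b ->
  RInt (fun t => f1 t - m * f2 t) a b = RInt f1 a b - m * RInt f2 a b.
Proof.
intros H1 H2.
change (RInt (fun t => minus (f1 t) (scal m (f2 t))) a b = RInt f1 a b - m * RInt f2 a b).
rewrite (@RInt_minus R_CompleteNormedModule); [| easy | apply (@ex_RInt_scal R_NormedModule); easy].
rewrite (@RInt_scal R_CompleteNormedModule); [reflexivity|easy].
Qed.

Lemma ex_scalR (f : R -> R) a b k : ex_RInt f a b -> ex_RInt (fun t => k * f t) a b.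
Proof. intros H. apply (@ex_RInt_scal R_NormedModule f a b k H). Qed.

Lemma RInt_scalR (f : R -> R) a b k : ex_RInt f a b -> RInt (fun t => k * f t) a b = k * RInt f a b.
Proof. intros H. apply (@RInt_scal R_CompleteNormedModule f a b k H). Qed.

Lemma Rpower_pos x y : 0 < Rpower x y.
Proof. unfold Rpower; apply exp_pos. Qed.

Theorem mainTheorem9 (gamma delta c alpha beta s : R) (g phi : R -> R)
  (Hgd : gamma < delta) (Hc : 0 < c)
  (Hg : forall t, gamma <= t <= delta -> g t = c * (delta - t))
  (Ha : 0 < alpha) (Hab : alpha < beta)
  (Hs : gamma < s < delta)
  (Hnn : forall t, gamma <= t <= delta -> 0 <= phi t)
  (Hconc : concave_on gamma delta phi)
  (Hpos : forall t, gamma <= t <= s -> 0 < phi t) :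
  RInt (fun t => t * Rpower (phi t) (alpha - beta) * Rpower (g t) beta) gamma s
    / RInt (fun t => Rpower (phi t) (alpha - beta) * Rpower (g t) beta) gamma s
  <= RInt (fun t => t * Rpower (delta - t) (alpha - beta) * Rpower (g t) beta) gamma s
    / RInt (fun t => Rpower (delta - t) (alpha - beta) * Rpower (g t) beta) gamma s
  /\
  RInt (fun t => t * Rpower (delta - t) (alpha - beta) * Rpower (g t) beta) gamma s
    / RInt (fun t => Rpower (delta - t) (alpha - beta) * Rpower (g t) beta) gamma s
  = RInt (fun t => t * Rpower (delta - t) alpha) gamma s
    / RInt (fun t => Rpower (delta - t) alpha) gamma s.
Proof.
destruct (conc_ext gamma delta phi Hconc s Hs Hpos) as [psi [Hpsi Hpc]].
set (F := fun t => phi t / (delta - t)).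
assert (HFpos : forall t, gamma <= t <= s -> 0 < F t).
{ intros t Ht. unfold F. apply Rdiv_lt_0_compat; [apply Hpos; lra| lra]. }
assert (HFmon : forall t u, gamma <= t <= u -> u <= s -> F t <= F u).
{ intros t u H1 H2. unfold F.
  pose proof (conc_key gamma delta phi Hconc t u delta ltac:(lra) ltac:(lra) ltac:(lra) ltac:(lra)) as K.
  pose proof (Hnn delta ltac:(lra)).
  apply (Rmult_le_reg_l ((delta - t)*(delta - u))); [nra|].
  replace ((delta - t) * (delta - u) * (phi t / (delta - t))) with ((delta - u)*phi t) by (field; lra).
  replace ((delta - t) * (delta - u) * (phi u / (delta - u))) with ((delta - t)*phi u) by (field; lra).
  nra. }
set (h := fun t => Rpower (F t) (alpha - beta)).
assert (Hhmon : forall t u, gamma <= t <= u -> u <= s -> h u <= h t).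
{ intros t u H1 H2. unfold h. apply Rpower_le_neg; [lra|]. split; [apply HFpos; lra| apply HFmon; lra]. }
set (cb := Rpower c beta).
assert (Hcb : 0 < cb) by apply Rpower_pos.
set (W := fun t => Rpower (psi t) (alpha - beta) * Rpower (c*(delta-t)) beta).
set (W1 := fun t => cb * Rpower (delta - t) alpha).
assert (HW1pos : forall t, 0 < W1 t).
{ intros t. unfold W1. pose proof (Rpower_pos (delta - t) alpha). nra. }
assert (HW : forall t, gamma < t < s -> W t = h t * W1 t).
{ intros t Ht. unfold W, h, W1, cb.
  rewrite Hpsi by lra.
  assert (E1 : Rpower (phi t) (alpha - beta) = Rpower (F t) (alpha - beta) * Rpower (delta - t) (alpha - beta)).
  { rewrite Rpower_mult_distr; [| apply HFpos; lra| lra]. f_equal. unfold F. field. lra. }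
  rewrite E1, Rmult_assoc, Lw by lra. reflexivity. }
assert (HcW : forall z, gamma <= z <= s -> continuous W z).
{ intros z Hz. unfold W. apply cont_mult_R.
  - apply cont_Rpow; apply Hpc; lra.
  - apply cont_Rpow; [apply cont_cdlt| nra]. }
assert (HcW1 : forall z, gamma <= z <= s -> continuous W1 z).
{ intros z Hz. unfold W1. apply cont_mult_R; [apply cont_cstR|].
  apply cont_Rpow; [apply cont_dlt| lra]. }
assert (HcP : forall z, gamma <= z <= s -> continuous (fun t => Rpower (delta - t) alpha) z).
{ intros z Hz. apply cont_Rpow; [apply cont_dlt| lra]. }
assert (IW : ex_RInt W gamma s) by (apply exR; [lra|exact HcW]).
assert (ItW : ex_RInt (fun t => t * W t) gamma s)
  by (apply exR; [lra|]; intros z Hz; apply cont_mult_R; [apply cont_idR| auto]).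
assert (IW1 : ex_RInt W1 gamma s) by (apply exR; [lra|exact HcW1]).
assert (ItW1 : ex_RInt (fun t => t * W1 t) gamma s)
  by (apply exR; [lra|]; intros z Hz; apply cont_mult_R; [apply cont_idR| auto]).
assert (IP : ex_RInt (fun t => Rpower (delta - t) alpha) gamma s) by (apply exR; [lra|exact HcP]).
assert (ItP : ex_RInt (fun t => t * Rpower (delta - t) alpha) gamma s)
  by (apply exR; [lra|]; intros z Hz; apply cont_mult_R; [apply cont_idR| auto]).
rewrite (RInt_ext' (fun t => t * Rpower (phi t) (alpha - beta) * Rpower (g t) beta) (fun t => t * W t))
  by (lra || (intros t Ht; unfold W; rewrite Hg, Hpsi by lra; ring)).
rewrite (RInt_ext' (fun t => Rpower (phi t) (alpha - beta) * Rpower (g t) beta) W)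
  by (lra || (intros t Ht; unfold W; rewrite Hg, Hpsi by lra; ring)).
rewrite (RInt_ext' (fun t => t * Rpower (delta - t) (alpha - beta) * Rpower (g t) beta) (fun t => t * W1 t))
  by (lra || (intros t Ht; unfold W1, cb; rewrite Hg by lra; rewrite Rmult_assoc, Lw by lra; ring)).
rewrite (RInt_ext' (fun t => Rpower (delta - t) (alpha - beta) * Rpower (g t) beta) W1)
  by (lra || (intros t Ht; unfold W1, cb; rewrite Hg by lra; rewrite Lw by lra; ring)).
set (A := RInt (fun t => t * W t) gamma s).
set (B := RInt W gamma s).
set (A0 := RInt (fun t => t * W1 t) gamma s).
set (B0 := RInt W1 gamma s).
set (A0' := RInt (fun t => t * Rpower (delta - t) alpha) gamma s).
set (B0' := RInt (fun t => Rpower (delta - t) alpha) gamma s).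
assert (EA0 : A0 = cb * A0').
{ unfold A0, A0'. rewrite <- RInt_scalR by exact ItP.
  apply RInt_ext'; [lra|]. intros t Ht. unfold W1; ring. }
assert (EB0 : B0 = cb * B0').
{ unfold B0, B0'. rewrite <- RInt_scalR by exact IP.
  apply RInt_ext'; [lra|]. intros t Ht. unfold W1; ring. }
assert (HB0' : 0 < B0').
{ assert (0 < Rpower (delta - s) alpha) by apply Rpower_pos.
  assert ((s - gamma) * Rpower (delta - s) alpha <= B0'); [|nra].
  apply RInt_ge_const; [lra|exact IP|].
  intros t Ht. apply Rle_Rpower_l; lra. }
assert (HB0 : 0 < B0) by (rewrite EB0; nra).
split.
2:{ rewrite EA0, EB0. field. lra. }
set (m := A0 / B0).
set (cm := Rmax gamma (Rmin m s)).
assert (Hcm : gamma <= cm <= s).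
{ unfold cm. pose proof (Rmax_l gamma (Rmin m s)). pose proof (Rmin_r m s).
  split; [lra|]. apply Rmax_lub; lra. }
set (K := h cm).
assert (HB : 0 < B).
{ assert (0 < h s) by apply Rpower_pos.
  assert (0 < Rpower (delta - s) alpha) by apply Rpower_pos.
  assert (0 < h s * (cb * Rpower (delta - s) alpha)) by (repeat apply Rmult_lt_0_compat; auto).
  assert ((s - gamma) * (h s * (cb * Rpower (delta - s) alpha)) <= B); [|nra].
  apply RInt_ge_const; [lra|exact IW|].
  intros t Ht. rewrite HW by lra.
  apply Rmult_le_compat; [lra|left; apply Rmult_lt_0_compat; auto| apply Hhmon; lra|].
  unfold W1. apply Rmult_le_compat_l; [lra|]. apply Rle_Rpower_l; lra. }
assert (Hkey : A - m * B <= 0).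
{ unfold A, B. rewrite <- RInt_lin by easy.
  apply Rle_trans with (RInt (fun t => K * (t * W1 t - m * W1 t)) gamma s).
  - apply RInt_le; [lra| apply ex_lin; easy| apply ex_scalR, ex_lin; easy|].
    intros t Ht. rewrite HW by lra.
    assert (Hsg : (t - m) * (h t - K) <= 0).
    { destruct (Rle_or_lt m t) as [Hmt|Hmt].
      - assert (cm <= t).
        { unfold cm. apply Rmax_lub; [lra|]. pose proof (Rmin_l m s); lra. }
        assert (h t <= K) by (apply Hhmon; lra). nra.
      - assert (t <= cm).
        { unfold cm. eapply Rle_trans; [|apply Rmax_r]. apply Rmin_glb; lra. }
        assert (K <= h t) by (apply Hhmon; lra). nra. }
    pose proof (HW1pos t). nra.
  - rewrite RInt_scalR by (apply ex_lin; easy).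
    rewrite RInt_lin by easy. fold A0 B0. unfold m.
    replace (A0 - A0 / B0 * B0) with 0 by (field; lra). lra. }
unfold Rdiv at 1.
apply Rle_trans with (m * B * / B).
- apply Rmult_le_compat_r; [left; apply Rinv_0_lt_compat; lra| lra].
- right. unfold m. field. lra.
Qed.
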